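(* Let $Q(z)$ be a $k\times k$ unimodular Hermite matrix of Laurent polynomials ($k\ge2$) whose $(1,1)$-entry $Q_{1,1}(z)$ is identically zero. Then there exist a $k\times k$ unimodular matrix $U(z)$ of Laurent polynomials and a $(k-1)\times(k-1)$ matrix $\widetilde Q(z)$ of Laurent polynomials such that $$Q(z)=U(z)\begin{bmatrix}1&\\&\widetilde Q(z)\end{bmatrix}U^\star(z).$$
   Context: For a matrix $U(z)=\sum_k U_k z^k$ of Laurent polynomials, $U^\star(z):=\sum_k\overline{U_k}^T z^{-k}$; Hermite means $A^\star=A$. A square matrix of Laurent polynomials is unimodular if its determinant is a nonzero monomial $cz^m$ ($c\ne0$, $m\in\mathbb{Z}$). *)

(* Defs.v *)
(* Laurent polynomials over a numeric closed field R
   (abstracting the complex numbers) are realised inside the field of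
   rational functions {fraction {poly R}}. *)
From HB Require Import structures.
From mathcomp Require Import all_boot all_order all_algebra.
Set Implicit Arguments. Unset Strict Implicit. Unset Printing Implicit Defensive.
Import Order.TTheory GRing.Theory Num.Theory.
Local Open Scope ring_scope.

Notation RF R := {fraction {poly R}}.

Definition zF (R : numClosedFieldType) : RF R := tofrac 'X.

Definition is_laurent (R : numClosedFieldType) (x : RF R) : Prop :=
  exists (p : {poly R}) (n : nat), x = tofrac p / zF R ^+ n.

Definition is_laurent_mx (R : numClosedFieldType) m n (A : 'M[RF R]_(m, n)) : Prop :=
  forall i j, is_laurent (A i j).

Definition pstar (R : numClosedFieldType) (p : {poly R}) : RF R :=
  \sum_(i < size p) tofrac ((p`_i)^*)%:P * (zF R)^-1 ^+ i.

(* star on rational functions: conjugate coefficients and substitute z -> 1/z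
   (computed on a numerator/denominator representative; restricts to the
   star of Laurent polynomials) *)
Definition fstar (R : numClosedFieldType) (x : RF R) : RF R :=
  pstar (\n_(repr x)) / pstar (\d_(repr x)).

Definition mxstar (R : numClosedFieldType) m n (A : 'M[RF R]_(m, n)) : 'M[RF R]_(n, m) :=
  \matrix_(i, j) fstar (A j i).

Definition hermite (R : numClosedFieldType) n (A : 'M[RF R]_n) : Prop :=
  mxstar A = A.

Definition unimodular (R : numClosedFieldType) n (A : 'M[RF R]_n) : Prop :=
  exists (c : R) (m : int), c != 0 /\ \det A = tofrac c%:P * zF R ^ m.

(* Main.v *)
Require Import Defs.
From HB Require Import structures.
From mathcomp Require Import all_boot all_order all_algebra.
Set Implicit Arguments. Unset Strict Implicit. Unset Printing Implicit Defensive.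
Import Order.TTheory GRing.Theory Num.Theory.
Local Open Scope ring_scope.
Local Open Scope quotient_scope.

Lemma fracE (F : idomainType) (x : {fraction F}) :
  x = tofrac (\n_(repr x)) / tofrac (\d_(repr x)).
Proof.
have dn : \d_(repr x) != 0 by [].
apply: (@mulIf _ (tofrac \d_(repr x))); first by rewrite tofrac_eq0.
rewrite divfK ?tofrac_eq0 //.
have := reprK x; set r := repr x => rx.
rewrite -{1}rx.
unlock tofrac.
rewrite !piE.
apply/eqmodP; rewrite /= FracField.equivfE /= !numden_Ratio ?oner_neq0 ?mulf_neq0 //.
all: try exact: oner_neq0.
by rewrite !mulr1 mulrC.
Qed.

Section Star.
Variable R : numClosedFieldType.
Local Notation F := (RF R).
Local Notation z := (zF R).
Implicit Types (p q : {poly R}) (c : R) (x y : F).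

Lemma z_neq0 : z != 0.
Proof. by rewrite /zF tofrac_eq0 polyX_eq0. Qed.

Definition cf (c : R) : F := tofrac (c^*)%:P.

Lemma cf_inj : injective cf.
Proof.
move=> a b h; rewrite /cf in h; move/eqP: h.
rewrite tofrac_eq (inj_eq polyC_inj) => /eqP h.
by rewrite -(conjCK a) h conjCK.
Qed.

Lemma cf0 : cf 0 = 0. Proof. by rewrite /cf rmorph0 tofrac0. Qed.
Lemma cf1 : cf 1 = 1. Proof. by rewrite /cf rmorph1 tofrac1. Qed.
Lemma cfD a b : cf (a + b) = cf a + cf b.
Proof. by rewrite /cf rmorphD polyCD tofracD. Qed.
Lemma cfM a b : cf (a * b) = cf a * cf b.
Proof. by rewrite /cf rmorphM polyCM tofracM. Qed.
Lemma cfN a : cf (- a) = - cf a.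
Proof. by rewrite /cf rmorphN polyCN tofracN. Qed.

Definition pmap (p : {poly R}) : {poly F} := map_poly cf p.

Lemma pstarE p : pstar p = (pmap p).[z^-1].
Proof.
rewrite horner_coef /pmap size_map_inj_poly ?cf0 //; last exact: cf_inj.
rewrite /pstar; apply: eq_bigr => i _. by rewrite coef_map_id0 ?cf0.
Qed.

Lemma pmapD p q : pmap (p + q) = pmap p + pmap q.
Proof. by apply/polyP => i; rewrite coefD !(coef_map_id0 _ _ cf0) /= coefD cfD. Qed.
Lemma pmapN p : pmap (- p) = - pmap p.
Proof. by apply/polyP => i; rewrite coefN !(coef_map_id0 _ _ cf0) /= coefN cfN. Qed.
Lemma pmapC c : pmap c%:P = (cf c)%:P.
Proof.
by apply/polyP=> i; rewrite (coef_map_id0 _ _ cf0) !coefC; case: (i == 0%N); rewrite ?cf0.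
Qed.
Lemma pmapX : pmap 'X = 'X.
Proof.
by apply/polyP=> i; rewrite (coef_map_id0 _ _ cf0) !coefX; case: (i == 1%N); rewrite ?cf0 ?cf1.
Qed.
Lemma pmapM p q : pmap (p * q) = pmap p * pmap q.
Proof.
apply/polyP => i; rewrite coefM !(coef_map_id0 _ _ cf0) /= coefM.
rewrite (big_morph cf cfD cf0); apply: eq_bigr => j _.
by rewrite cfM !(coef_map_id0 _ _ cf0).
Qed.

Lemma pstarD p q : pstar (p + q) = pstar p + pstar q.
Proof. by rewrite !pstarE pmapD hornerD. Qed.
Lemma pstarM p q : pstar (p * q) = pstar p * pstar q.
Proof. by rewrite !pstarE pmapM hornerM. Qed.
Lemma pstarN p : pstar (- p) = - pstar p.
Proof. by rewrite !pstarE pmapN hornerN. Qed.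
Lemma pstarC c : pstar c%:P = cf c.
Proof. by rewrite pstarE pmapC hornerC. Qed.
Lemma pstarX : pstar 'X = z^-1.
Proof. by rewrite pstarE pmapX hornerX. Qed.
Lemma pstar1 : pstar (1 : {poly R}) = 1.
Proof. by rewrite pstarC cf1. Qed.
Lemma pstar_neq0 p : p != 0 -> pstar p != 0.
Proof.
move=> p0.
set N := (size p).-1.
have hN : (N < size p)%N by rewrite /N prednK // size_poly_gt0.
set r : {poly R} := \sum_(i < size p) ((p`_i)^*)%:P * 'X^(N - i).
have e : z ^+ N * pstar p = tofrac r.
  rewrite /pstar mulr_sumr rmorph_sum; apply: eq_bigr => i _.
  have iN : (i <= N)%N by rewrite -ltnS /N prednK ?size_poly_gt0.
  rewrite rmorphM rmorphXn /= -/(zF R) -{1}(subnK iN) exprD mulrCA mulrA.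
  by rewrite -!mulrA exprVn mulfV ?expf_neq0 ?z_neq0 // mulr1.
apply: contra_neq (_ : r != 0) => [h|].
  by apply/eqP; rewrite -tofrac_eq0 -e h mulr0.
apply/eqP => /(congr1 (fun q => q`_0)); rewrite coef0 coef_sum.
rewrite (bigD1 (Ordinal hN)) //= big1 ?addr0.
  rewrite coefCM subnn coefXn eqxx mulr1 => /eqP.
  rewrite conjC_eq0 => /eqP h.
  by move: p0; rewrite -lead_coef_eq0 lead_coefE -/N h eqxx.
move=> i ne; rewrite coefCM coefXn.
have : (i < N)%N.
  have : (i <= N)%N by rewrite -ltnS /N prednK ?size_poly_gt0.
  rewrite leq_eqVlt => /orP [/eqP h|//].
  by move: ne; rewrite -val_eqE /= h eqxx.
by rewrite -subn_gt0 eq_sym => /lt0n_neq0 /negbTE ->; rewrite mulr0.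
Qed.

Lemma fstar_frac p q : q != 0 -> fstar (tofrac p / tofrac q) = pstar p / pstar q.
Proof.
move=> q0; rewrite /fstar.
set x := tofrac p / tofrac q.
have d0 : \d_(repr x) != 0 by [].
have e := fracE x; rewrite {1}/x in e.
have h : tofrac p / tofrac q == tofrac \n_(repr x) / tofrac \d_(repr x) by rewrite -e.
move: h; rewrite eqr_div ?tofrac_eq0 // -!tofracM tofrac_eq => /eqP e2.
apply/eqP; rewrite eqr_div ?pstar_neq0 //.
by rewrite -!pstarM e2 mulrC.
Qed.

Lemma fstar_tofrac p : fstar (tofrac p) = pstar p.
Proof.
by rewrite -[tofrac p]divr1 -tofrac1 fstar_frac ?oner_neq0 // pstar1 divr1.
Qed.

Lemma fracE2 (x : F) : exists p q, q != 0 /\ x = tofrac p / tofrac q.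
Proof. exists \n_(repr x), \d_(repr x); split; [exact: denom_ratioP | exact: fracE]. Qed.

Lemma fstarD x y : fstar (x + y) = fstar x + fstar y.
Proof.
have [p [q [q0 ->]]] := fracE2 x; have [p' [q' [q0' ->]]] := fracE2 y.
have e : tofrac p / tofrac q + tofrac p' / tofrac q' =
   tofrac (p * q' + p' * q) / tofrac (q * q').
  by rewrite addf_div ?tofrac_eq0 // tofracD !tofracM.
rewrite e !fstar_frac ?mulf_neq0 // pstarD !pstarM.
by rewrite addf_div ?pstar_neq0.
Qed.

Lemma fstarM x y : fstar (x * y) = fstar x * fstar y.
Proof.
have [p [q [q0 ->]]] := fracE2 x; have [p' [q' [q0' ->]]] := fracE2 y.
have e : tofrac p / tofrac q * (tofrac p' / tofrac q') =
   tofrac (p * p') / tofrac (q * q').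
  by rewrite !tofracM mulf_div.
rewrite e !fstar_frac ?mulf_neq0 // !pstarM.
by rewrite mulf_div.
Qed.

Lemma fstarN x : fstar (- x) = - fstar x.
Proof.
have [p [q [q0 ->]]] := fracE2 x.
by rewrite -mulNr -tofracN !fstar_frac // pstarN mulNr.
Qed.

Lemma fstar1 : fstar (1 : F) = 1.
Proof. by rewrite -tofrac1 fstar_tofrac pstar1. Qed.

Lemma fstar_zmod : zmod_morphism (@fstar R).
Proof. by move=> x y; rewrite fstarD fstarN. Qed.
Lemma fstar_monoid : monoid_morphism (@fstar R).
Proof. by split; [exact: fstar1 | exact: fstarM]. Qed.

HB.instance Definition _ := GRing.isZmodMorphism.Build F F (@fstar R) fstar_zmod.
HB.instance Definition _ := GRing.isMonoidMorphism.Build F F (@fstar R) fstar_monoid.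

Lemma fstarXn x n : fstar (x ^+ n) = fstar x ^+ n.
Proof. exact: rmorphXn. Qed.
Lemma fstarV x : fstar (x^-1) = (fstar x)^-1.
Proof. exact: fmorphV. Qed.
Lemma fstar_sum I (r : seq I) (P : pred I) (G : I -> F) :
  fstar (\sum_(i <- r | P i) G i) = \sum_(i <- r | P i) fstar (G i).
Proof. exact: rmorph_sum. Qed.

Lemma fstarC c : fstar (tofrac c%:P) = cf c.
Proof. by rewrite fstar_tofrac pstarC. Qed.
Lemma fstar_z : fstar z = z^-1.
Proof. by rewrite /zF fstar_tofrac pstarX. Qed.
Lemma fstar_cf c : fstar (cf c) = tofrac c%:P.
Proof. by rewrite {1}/cf fstarC /cf conjCK. Qed.

Lemma fstar_pstar p : fstar (pstar p) = tofrac p.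
Proof.
rewrite /pstar fstar_sum.
have ep : p = \sum_(i < size p) (p`_i)%:P * 'X^i.
  by rewrite -[p in LHS]coefK poly_def; apply: eq_bigr => i _; rewrite mul_polyC.
transitivity (tofrac (\sum_(i < size p) (p`_i)%:P * 'X^i)); last by rewrite -ep.
rewrite rmorph_sum; apply: eq_bigr => i _ /=.
rewrite fstarM fstarXn fstarV fstar_z invrK tofracM tofracXn.
by congr (_ * _); rewrite -/(cf _) fstar_cf.
Qed.

Lemma fstarK x : fstar (fstar x) = x.
Proof.
have [p [q [q0 ->]]] := fracE2 x.
by rewrite fstar_frac // fmorph_div /= !fstar_pstar.
Qed.

Local Notation lau := (@is_laurent R).

Lemma lau_poly p : lau (tofrac p).
Proof. by exists p, 0%N; rewrite expr0 divr1. Qed.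
Lemma lau0 : lau 0. Proof. by rewrite -tofrac0; exact: lau_poly. Qed.
Lemma lau1 : lau 1. Proof. by rewrite -tofrac1; exact: lau_poly. Qed.
Lemma lauD x y : lau x -> lau y -> lau (x + y).
Proof.
move=> [p [n ->]] [q [m ->]]; exists (p * 'X^m + q * 'X^n), (n + m)%N.
by rewrite addf_div ?expf_neq0 ?z_neq0 // -exprD tofracD !tofracM !tofracXn.
Qed.
Lemma lauM x y : lau x -> lau y -> lau (x * y).
Proof.
move=> [p [n ->]] [q [m ->]]; exists (p * q), (n + m)%N.
by rewrite mulf_div -exprD tofracM.
Qed.
Lemma lauN x : lau x -> lau (- x).
Proof. by move=> [p [n ->]]; exists (- p), n; rewrite tofracN mulNr. Qed.
Lemma lauB x y : lau x -> lau y -> lau (x - y).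
Proof. by move=> hx hy; apply: lauD => //; apply: lauN. Qed.
Lemma lau_z : lau z. Proof. exact: lau_poly. Qed.
Lemma lau_zV : lau z^-1.
Proof. by exists 1, 1%N; rewrite tofrac1 expr1 div1r. Qed.
Lemma lauXn x n : lau x -> lau (x ^+ n).
Proof.
move=> hx; elim: n => [|n ih]; first by rewrite expr0; exact: lau1.
by rewrite exprS; apply: lauM.
Qed.
Lemma lau_zz (m : int) : lau (z ^ m).
Proof.
case: m => k.
  exact: lauXn lau_z.
change (lau (z ^+ k.+1)^-1); rewrite -exprVn; exact: lauXn lau_zV.
Qed.
Lemma lau_cf c : lau (cf c). Proof. exact: lau_poly. Qed.
Lemma lau_C c : lau (tofrac c%:P). Proof. exact: lau_poly. Qed.

Lemma lau_sum I (r : seq I) (P : pred I) (G : I -> F) :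
  (forall i, P i -> lau (G i)) -> lau (\sum_(i <- r | P i) G i).
Proof. by move=> h; apply: big_ind => //; [exact: lau0 | exact: lauD]. Qed.
Lemma lau_prod I (r : seq I) (P : pred I) (G : I -> F) :
  (forall i, P i -> lau (G i)) -> lau (\prod_(i <- r | P i) G i).
Proof. by move=> h; apply: big_ind => //; [exact: lau1 | exact: lauM]. Qed.

Lemma lau_pstar p : lau (pstar p).
Proof.
rewrite /pstar; apply: lau_sum => i _; apply: lauM; first exact: lau_C.
exact: lauXn lau_zV.
Qed.

Lemma lau_fstar x : lau x -> lau (fstar x).
Proof.
move=> [p [n ->]]; rewrite fmorph_div /= fstarXn fstar_tofrac fstar_z exprVn invrK.
by apply: lauM; [exact: lau_pstar | exact: lauXn lau_z].
Qed.

Lemma lau_mono_inv c (m : int) : c != 0 -> lau ((tofrac c%:P * z ^ m)^-1).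
Proof.
move=> c0; rewrite invfM invr_expz; apply: lauM; last exact: lau_zz.
rewrite (@mulr1_eq _ _ (tofrac (c^-1)%:P)); first exact: lau_C.
by rewrite -tofracM -polyCM mulfV // tofrac1.
Qed.

Lemma fstar_self2 : fstar (2^-1 : F) = 2^-1.
Proof. by rewrite fstarV rmorph_nat. Qed.

Lemma two_eq : (2 : F) = tofrac ((2 : R)%:P).
Proof.
  by rewrite polyCMn rmorphMn /= polyC1 tofrac1.
Qed.
Lemma two_neq0 : (2 : F) != 0.
Proof. by rewrite two_eq tofrac_eq0 polyC_eq0 pnatr_eq0. Qed.
Lemma lau_half : lau (2^-1 : F).
Proof.
rewrite (@mulr1_eq _ _ (tofrac ((2 : R)^-1)%:P)); first exact: lau_C.
by rewrite two_eq -tofracM -polyCM mulfV ?pnatr_eq0 // tofrac1.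
Qed.

Implicit Types (m k : nat).

Lemma mxstarE m k (A : 'M[F]_(m, k)) : mxstar A = (map_mx (@fstar R) A)^T.
Proof. by apply/matrixP => i j; rewrite !mxE. Qed.

Lemma mxstarM m k l (A : 'M[F]_(m, k)) (B : 'M[F]_(k, l)) :
  mxstar (A *m B) = mxstar B *m mxstar A.
Proof. by rewrite !mxstarE map_mxM trmx_mul. Qed.
Lemma mxstarD m k (A B : 'M[F]_(m, k)) : mxstar (A + B) = mxstar A + mxstar B.
Proof. by apply/matrixP => i j; rewrite !mxE fstarD. Qed.
Lemma mxstarN m k (A : 'M[F]_(m, k)) : mxstar (- A) = - mxstar A.
Proof. by apply/matrixP => i j; rewrite !mxE fstarN. Qed.
Lemma mxstarB m k (A B : 'M[F]_(m, k)) : mxstar (A - B) = mxstar A - mxstar B.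
Proof. by rewrite mxstarD mxstarN. Qed.
Lemma mxstar_scalar m (a : F) : mxstar (a%:M : 'M_m) = (fstar a)%:M.
Proof. by rewrite mxstarE map_scalar_mx tr_scalar_mx. Qed.
Lemma mxstar1 m : mxstar (1%:M : 'M[F]_m) = 1%:M.
Proof. by rewrite mxstar_scalar fstar1. Qed.
Lemma mxstar0 m k : mxstar (0 : 'M[F]_(m, k)) = 0.
Proof. by apply/matrixP => i j; rewrite !mxE rmorph0. Qed.
Lemma mxstarK m k (A : 'M[F]_(m, k)) : mxstar (mxstar A) = A.
Proof. by apply/matrixP => i j; rewrite !mxE fstarK. Qed.
Lemma mxstar_block m1 m2 k1 k2 (A : 'M[F]_(m1, k1)) (B : 'M[F]_(m1, k2))
   (C : 'M[F]_(m2, k1)) (D : 'M[F]_(m2, k2)) :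
  mxstar (block_mx A B C D) = block_mx (mxstar A) (mxstar C) (mxstar B) (mxstar D).
Proof. by rewrite !mxstarE map_block_mx tr_block_mx. Qed.
Lemma det_mxstar m (A : 'M[F]_m) : \det (mxstar A) = fstar (\det A).
Proof. by rewrite mxstarE det_tr det_map_mx. Qed.

Local Notation laumx := (@is_laurent_mx R _ _).

Lemma laumxD m k (A B : 'M[F]_(m, k)) : laumx A -> laumx B -> laumx (A + B).
Proof. by move=> hA hB i j; rewrite mxE; apply: lauD. Qed.
Lemma laumxN m k (A : 'M[F]_(m, k)) : laumx A -> laumx (- A).
Proof. by move=> hA i j; rewrite mxE; apply: lauN. Qed.
Lemma laumxB m k (A B : 'M[F]_(m, k)) : laumx A -> laumx B -> laumx (A - B).
Proof. by move=> hA hB; apply: laumxD => //; apply: laumxN. Qed.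
Lemma laumxM m k l (A : 'M[F]_(m, k)) (B : 'M[F]_(k, l)) :
  laumx A -> laumx B -> laumx (A *m B).
Proof.
by move=> hA hB i j; rewrite mxE; apply: lau_sum => t _; apply: lauM.
Qed.
Lemma laumx_star m k (A : 'M[F]_(m, k)) : laumx A -> laumx (mxstar A).
Proof. by move=> hA i j; rewrite mxE; apply: lau_fstar. Qed.
Lemma laumx_scalar m (a : F) : lau a -> laumx (a%:M : 'M_m).
Proof. by move=> ha i j; rewrite mxE; case: (i == j); [exact: ha | exact: lau0]. Qed.
Lemma laumx0 m k : laumx (0 : 'M[F]_(m, k)).
Proof. by move=> i j; rewrite mxE; exact: lau0. Qed.
Lemma laumx1 m : laumx (1%:M : 'M[F]_m).
Proof. exact: laumx_scalar lau1. Qed.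
Lemma laumx_row m k1 k2 (A : 'M[F]_(m, k1)) (B : 'M[F]_(m, k2)) :
  laumx A -> laumx B -> laumx (row_mx A B).
Proof. by move=> hA hB i j; rewrite mxE; case: split => t. Qed.
Lemma laumx_col m1 m2 k (A : 'M[F]_(m1, k)) (B : 'M[F]_(m2, k)) :
  laumx A -> laumx B -> laumx (col_mx A B).
Proof. by move=> hA hB i j; rewrite mxE; case: split => t. Qed.
Lemma laumx_block m1 m2 k1 k2 (A : 'M[F]_(m1, k1)) (B : 'M[F]_(m1, k2))
   (C : 'M[F]_(m2, k1)) (D : 'M[F]_(m2, k2)) :
  laumx A -> laumx B -> laumx C -> laumx D -> laumx (block_mx A B C D).
Proof. by move=> *; apply: laumx_col; apply: laumx_row. Qed.
Lemma laumx_dl m1 m2 k1 k2 (A : 'M[F]_(m1 + m2, k1 + k2)) : laumx A -> laumx (dlsubmx A).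
Proof. by move=> hA i j; rewrite !mxE. Qed.
Lemma laumx_ur m1 m2 k1 k2 (A : 'M[F]_(m1 + m2, k1 + k2)) : laumx A -> laumx (ursubmx A).
Proof. by move=> hA i j; rewrite !mxE. Qed.
Lemma laumx_dr m1 m2 k1 k2 (A : 'M[F]_(m1 + m2, k1 + k2)) : laumx A -> laumx (drsubmx A).
Proof. by move=> hA i j; rewrite !mxE. Qed.
Lemma lau_det m (A : 'M[F]_m) : laumx A -> lau (\det A).
Proof.
move=> hA; rewrite /determinant; apply: lau_sum => s _; apply: lauM.
  exact: lauXn (lauN lau1).
by apply: lau_prod => i _.
Qed.
Lemma laumx_adj m (A : 'M[F]_m) : laumx A -> laumx (\adj A).
Proof.
move=> hA i j; rewrite mxE /cofactor; apply: lauM.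
  exact: lauXn (lauN lau1).
by apply: lau_det => a b; rewrite !mxE.
Qed.
Lemma laumxZ m k (a : F) (A : 'M[F]_(m, k)) : lau a -> laumx A -> laumx (a *: A).
Proof. by move=> ha hA i j; rewrite mxE; apply: lauM. Qed.

Lemma mxstarZ m k (x : F) (A : 'M[F]_(m, k)) : mxstar (x *: A) = fstar x *: mxstar A.
Proof. by apply/matrixP => i j; rewrite !mxE fstarM. Qed.

Lemma half_half : (2^-1 : F) + 2^-1 = 1.
Proof. by rewrite -mulr2n -[_^-1 *+ 2]mulr_natr mulVf // two_neq0. Qed.

End Star.

Unset Implicit Arguments.
Set Strict Implicit.
Local Close Scope quotient_scope.

Theorem lemma4p3 (R : numClosedFieldType) (n : nat) (Q : 'M[RF R]_(n.+2)) :
  is_laurent_mx Q -> hermite Q -> unimodular Q -> Q ord0 ord0 = 0 ->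
  exists (U : 'M[RF R]_(n.+2)) (Qt : 'M[RF R]_(n.+1)),
    [/\ is_laurent_mx U, unimodular U, is_laurent_mx Qt &
        Q = U *m (block_mx (1%:M : 'M[RF R]_1) 0 0 Qt : 'M[RF R]_(n.+2)) *m mxstar U].
Proof.
move=> hL hH [c [m [c0 hdet]]] h00.
pose Q' : 'M[RF R]_(1 + n.+1) := Q.
have hul : ulsubmx Q' = 0.
  apply/matrixP => i j; rewrite !ord1 !mxE.
  have -> : lshift n.+1 (ord0 : 'I_1) = ord0 by apply/val_inj.
  exact: h00.
set r := ursubmx Q'; set h := dlsubmx Q'; set S := drsubmx Q'.
have eQ : Q' = block_mx 0 r h S by rewrite -hul submxK.
have hH' : mxstar Q' = Q' by exact: hH.
rewrite eQ mxstar_block in hH'.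
have [_ h1 h2 h3] := eq_block_mx hH'.
have hunit : Q \in unitmx.
  rewrite unitmxE unitfE hdet mulf_neq0 //.
    by rewrite tofrac_eq0 polyC_eq0.
  by rewrite expfz_neq0 // z_neq0.
pose V : 'M[RF R]_(1 + n.+1) := invmx Q.
have hQV : Q' *m V = 1%:M by exact: mulmxV.
pose v := dlsubmx V.
have hrv : r *m v = 1%:M.
  move: hQV; rewrite eQ -[V]submxK mulmx_block (scalar_mx_block 1 n.+1).
  by case/eq_block_mx => + _ _ _; rewrite mul0mx add0r.
have hLV : is_laurent_mx V.
  rewrite /V /invmx hunit; apply: laumxZ; last exact: laumx_adj.
  by rewrite hdet; apply: lau_mono_inv.
have hLv : is_laurent_mx v by apply: laumx_dl.
have hLQ' : is_laurent_mx Q' by [].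
have hLr : is_laurent_mx r by apply: laumx_ur.
have hLS : is_laurent_mx S by apply: laumx_dr.
pose g := mxstar v *m S *m v.
pose a : 'M[RF R]_1 := 2^-1 *: (1%:M - g).
pose b := - (a *m r + mxstar v *m S).
pose W : 'M[RF R]_(1 + n.+1) := block_mx a b v 1%:M.
have hg : mxstar g = g by rewrite /g !mxstarM mxstarK h3 mulmxA.
have ha : mxstar a = a by rewrite /a mxstarZ fstar_self2 mxstarB mxstar1 hg.
have hvh : mxstar v *m h = 1%:M by rewrite -h2 -mxstarM hrv mxstar1.
have key : a + a + g = 1%:M.
  by rewrite /a -scalerDl half_half scale1r subrK.
have key2 : a - b *m v = 1%:M.
  by rewrite /b mulNmx opprK mulmxDl -mulmxA hrv mulmx1 -/g addrA key.
have hLa : is_laurent_mx a.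
  apply: laumxZ; first exact: lau_half.
  apply: laumxB; first exact: laumx1.
  by apply: laumxM; [apply: laumxM; [apply: laumx_star|]|].
have hLb : is_laurent_mx b.
  apply: laumxN; apply: laumxD; first by apply: laumxM.
  by apply: laumxM; [apply: laumx_star|].
have hLW : is_laurent_mx W by apply: laumx_block => //; exact: laumx1.
have hdetW : \det W = 1.
  have -> : W = block_mx (a - b *m v) b 0 1%:M *m block_mx 1%:M 0 v 1%:M.
    rewrite mulmx_block ?mulmx1 ?mul1mx ?mulmx0 ?mul0mx ?addr0 ?add0r subrK.
    by [].
  by rewrite det_mulmx det_ublock det_lblock key2 !det1 !mulr1.
pose D := mxstar W *m Q' *m W.
have hD : D = block_mx 1%:M 0 0 (drsubmx D).
  rewrite /D /W eQ mxstar_block ha mxstar1 !mulmx_block block_mxKdr.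
  rewrite !mulmx0 !mul1mx !add0r hvh !mul1mx.
  congr block_mx.
  - by rewrite mulmxDl -mulmxA hrv mulmx1 -/g addrA key.
  - by rewrite mulmx1 /b addNr.
  - rewrite mulmxDl -mulmxA hrv mulmx1.
    rewrite /b mxstarN mxstarD !mxstarM mxstarK ha h2 h3.
    by rewrite opprD subrK addrN.
have hWadj : W *m \adj W = 1%:M by rewrite mul_mx_adj hdetW.
have hdadj : \det (\adj W) = 1.
  have := congr1 determinant hWadj; rewrite det_mulmx hdetW mul1r det1.
  by [].
exists (mxstar (\adj W)), (drsubmx D); split.
- by apply: laumx_star; apply: laumx_adj.
- exists 1, 0; split; first exact: oner_neq0.
  by rewrite det_mxstar hdadj fstar1 expr0z mulr1 polyC1 tofrac1.
- by apply: laumx_dr; apply: laumxM; [apply: laumxM; [apply: laumx_star|]|].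
- rewrite mxstarK.
  change (Q' = mxstar (\adj W) *m block_mx 1%:M 0 0 (drsubmx D) *m \adj W).
  rewrite -hD /D !mulmxA -mxstarM hWadj mxstar1 mul1mx -mulmxA hWadj mulmx1.
  by [].
Qed.
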